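(* Let $A,B\in\mathcal{B}(\mathcal{H})$ and let $B=X+iY$ be the Cartesian decomposition of $B$. Then $$w^2(AB\pm BA^* )\leq 2\|A\|^2\left(w(X^2)+w(Y^2)+\sqrt{\left(w(X^2)-w(Y^2)\right)^2+w^2(XY+YX)}\right).$$
   Context: $\mathcal{H}$ is a complex Hilbert space and $\mathcal{B}(\mathcal{H})$ is the algebra of bounded linear operators on $\mathcal{H}$. For $T\in\mathcal{B}(\mathcal{H})$, $w(T)=\sup\{|\langle Tx,x\rangle|:x\in\mathcal{H},\|x\|=1\}$ is the numerical radius and $\|T\|$ the operator norm. The Cartesian decomposition $B=X+iY$ means $X=\frac{B+B^*}{2}$ and $Y=\frac{B-B^*}{2i}$, both self-adjoint. *)

(* Defs.v *)
From HB Require Import structures.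
From mathcomp Require Import all_boot all_order all_algebra.
From mathcomp Require Import all_classical all_reals.
From mathcomp Require Import complex.
Set Implicit Arguments. Unset Strict Implicit. Unset Printing Implicit Defensive.
Import Order.TTheory GRing.Theory Num.Theory ComplexField Normc.
Local Open Scope ring_scope.
Local Open Scope classical_set_scope.
Local Open Scope complex_scope.

Section Hilbert.
Variable R : realType.
Variable V : lmodType R[i].
Variable ip : V -> V -> R[i].

Definition vnorm (x : V) : R := Num.sqrt (complex.Re (ip x x)).

Record is_hilbert : Prop := IsHilbert {
  ip_linl : forall (a : R[i]) (x y z : V), ip (a *: x + y) z = a * ip x z + ip y z;
  ip_conj : forall x y : V, ip y x = (ip x y)^*;
  ip_pos  : forall x : V, x != 0 -> 0 < ip x x;
  ip_complete : forall u : nat -> V,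
    (forall e : R, 0 < e -> exists N : nat, forall m n : nat,
        (N <= m)%N -> (N <= n)%N -> vnorm (u m - u n) < e) ->
    exists l : V, forall e : R, 0 < e -> exists N : nat, forall n : nat,
        (N <= n)%N -> vnorm (u n - l) < e }.

Definition bounded_op (T : V -> V) : Prop :=
  (forall (a : R[i]) (x y : V), T (a *: x + y) = a *: T x + T y) /\
  exists M : R, forall x : V, vnorm (T x) <= M * vnorm x.

Definition is_adjoint (T T' : V -> V) : Prop :=
  forall x y : V, ip (T x) y = ip x (T' y).

Definition opnorm (T : V -> V) : R :=
  sup [set vnorm (T x) | x in [set x : V | vnorm x <= 1]].

Definition numrad (T : V -> V) : R :=
  sup [set normc (ip (T x) x) | x in [set x : V | vnorm x = 1]].

Definition opadd (S T : V -> V) : V -> V := fun x => S x + T x.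
Definition opsub (S T : V -> V) : V -> V := fun x => S x - T x.
Definition opmul (S T : V -> V) : V -> V := fun x => S (T x).
Definition opscale (a : R[i]) (T : V -> V) : V -> V := fun x => a *: T x.

(* Cartesian decomposition B = X + iY with B^* = Bs *)
Definition re_part (B Bs : V -> V) : V -> V := opscale (2%:R)^-1 (opadd B Bs).
Definition im_part (B Bs : V -> V) : V -> V := opscale (2%:R * Complex 0 1)^-1 (opsub B Bs).

End Hilbert.

(* Main.v *)
Require Import Defs.
From HB Require Import structures.
From mathcomp Require Import all_boot all_order all_algebra.
From mathcomp Require Import all_classical all_reals.
From mathcomp Require Import complex.
From mathcomp Require Import ring lra.
Import Order.TTheory GRing.Theory Num.Theory ComplexField Normc.
Local Open Scope ring_scope.
Local Open Scope complex_scope.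
Notation Rc := (@complex.Re _).
Notation Ic := (@complex.Im _).

Section Basic.
Context {R : realType}.

Lemma two_C : (2%:R : R[i]) = Complex 2 0.
Proof. by rewrite -(rmorph_nat (real_complex R)). Qed.

Lemma inv2i : ((2%:R * 'i)^-1 : R[i]) = Complex 0 (-(2^-1)).
Proof.
have h : (2%:R * 'i : R[i]) != 0.
  by rewrite two_C; apply/eqP => /(congr1 Ic) /=; rewrite mulr1 mulr0 addr0 => /eqP; rewrite pnatr_eq0.
apply: (mulfI h); rewrite mulfV // two_C; simpc; rewrite /=.
by apply/eqP; rewrite eq_complex /=; apply/andP; split; apply/eqP; field.
Qed.

Lemma inv2 : ((2%:R)^-1 : R[i]) = Complex (2^-1) 0.
Proof.
have h : (2%:R : R[i]) != 0 by rewrite pnatr_eq0.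
apply: (mulfI h); rewrite mulfV // two_C; simpc; rewrite /=.
by apply/eqP; rewrite eq_complex /=; apply/andP; split; apply/eqP; field.
Qed.

Lemma normc_ge0 (w : R[i]) : 0 <= normc w.
Proof. by case: w => a b; rewrite /= sqrtr_ge0. Qed.

Lemma normc_sq (w : R[i]) : normc w ^+ 2 = Rc w ^+ 2 + Ic w ^+ 2.
Proof. by case: w => a b; rewrite /= sqr_sqrtr // addr_ge0 // sqr_ge0. Qed.

Lemma Rc_le (w : R[i]) : `|Rc w| <= normc w.
Proof.
have h := normc_sq w; have h1 := normc_ge0 w.
have h2 : `|Rc w| ^+ 2 = Rc w ^+ 2 by rewrite real_normK // num_real.
have h3 := normr_ge0 (Rc w). nra.
Qed.

Lemma Ic_le (w : R[i]) : `|Ic w| <= normc w.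
Proof.
have h := normc_sq w; have h1 := normc_ge0 w.
have h2 : `|Ic w| ^+ 2 = Ic w ^+ 2 by rewrite real_normK // num_real.
have h3 := normr_ge0 (Ic w). nra.
Qed.

Lemma Rc_conj (w : R[i]) : Rc (w^*) = Rc w.
Proof. by case: w. Qed.

Lemma normc_conj (w : R[i]) : normc (w^*) = normc w.
Proof. by case: w => a b; rewrite /= sqrrN. Qed.

Lemma Rc_conjM (w : R[i]) : Rc (w^* * w) = normc w ^+ 2.
Proof. rewrite normc_sq; case: w => a b /=; ring. Qed.

Lemma RcM_real (s : R) (w : R[i]) : Rc (s%:C * w) = s * Rc w.
Proof. by case: w => a b /=; ring. Qed.
Lemma IcM_real (s : R) (w : R[i]) : Ic (s%:C * w) = s * Ic w.
Proof. by case: w => a b /=; ring. Qed.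

Lemma RcD (w1 w2 : R[i]) : Rc (w1 + w2) = Rc w1 + Rc w2.
Proof. by case: w1 => ? ?; case: w2. Qed.
Lemma IcD (w1 w2 : R[i]) : Ic (w1 + w2) = Ic w1 + Ic w2.
Proof. by case: w1 => ? ?; case: w2. Qed.

Lemma normc_real (s : R) : normc (s%:C) = `|s|.
Proof. by rewrite /= expr0n /= addr0 sqrtr_sqr. Qed.

Lemma sq_le (x y : R) : x ^+ 2 <= y ^+ 2 -> 0 <= y -> x <= y.
Proof. move=> h1 h2; nra. Qed.

Lemma real_cs (a b c : R) :
  (forall s t, 0 <= s ^+ 2 * a + 2 * s * t * b + t ^+ 2 * c) ->
  0 <= a -> 0 <= c -> b <= Num.sqrt a * Num.sqrt c.
Proof.
move=> h ha hc.
set sa := Num.sqrt a; set sc := Num.sqrt c.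
have ea : sa ^+ 2 = a by rewrite sqr_sqrtr.
have ec : sc ^+ 2 = c by rewrite sqr_sqrtr.
have ga : 0 <= sa by apply: sqrtr_ge0.
have gc : 0 <= sc by apply: sqrtr_ge0.
have h1 := h sc (- sa).
have [p|z] := ltP 0 (sa * sc).
  nra.
have z0 : sa * sc = 0 by apply/le_anti; rewrite z /= mulr_ge0.
have := h (- (c + 1)) b; have := h b (- (a + 1)).
rewrite z0.
move: z0 => /eqP; rewrite mulf_eq0 => /orP[] /eqP e.
  have a0 : a = 0 by rewrite -ea e expr0n.
  rewrite a0 => _ h2. have h3 : b ^+ 2 * (c + 2) <= 0 by nra.
  have : b ^+ 2 <= 0 by nra. nra.
have c0 : c = 0 by rewrite -ec e expr0n.
rewrite c0 => h2 _. have h3 : b ^+ 2 * (a + 2) <= 0 by nra.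
have : b ^+ 2 <= 0 by nra. nra.
Qed.

End Basic.

Section Num2.
Context {R : realType}.

Lemma zp_norm (P Q : R[i]) :
  normc (P + 'i * Q + (P^* + 'i * Q^*)) ^+ 2 = 4 * (Rc P ^+ 2 + Rc Q ^+ 2).
Proof. rewrite normc_sq; case: P => a b; case: Q => c d /=; ring. Qed.

Lemma zm_norm (P Q : R[i]) :
  normc (P + 'i * Q - (P^* + 'i * Q^*)) ^+ 2 = 4 * (Ic P ^+ 2 + Ic Q ^+ 2).
Proof. rewrite normc_sq; case: P => a b; case: Q => c d /=; ring. Qed.

Lemma final_real (p q a b d wX wY wXY O G : R) :
  0 <= a -> a <= wX -> 0 <= b -> b <= wY -> `|d| <= wXY -> 0 <= G -> G <= O ^+ 2 ->
  (p ^+ 2 + q ^+ 2) ^+ 2 <= (p ^+ 2 * a + q ^+ 2 * b + p * q * d) * G ->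
  4 * (p ^+ 2 + q ^+ 2) <= 2 * O ^+ 2 * (wX + wY + Num.sqrt ((wX - wY) ^+ 2 + wXY ^+ 2)).
Proof.
move=> ha haX hb hbY hd hG hGO h.
set S := Num.sqrt _.
have S0 : 0 <= S by apply: sqrtr_ge0.
have S2 : S ^+ 2 = (wX - wY) ^+ 2 + wXY ^+ 2 by rewrite sqr_sqrtr // addr_ge0 // sqr_ge0.
set u := `|p|; set v := `|q|.
have u2 : u ^+ 2 = p ^+ 2 by rewrite real_normK // num_real.
have v2 : v ^+ 2 = q ^+ 2 by rewrite real_normK // num_real.
have u0 : 0 <= u by apply: normr_ge0.
have v0 : 0 <= v by apply: normr_ge0.
have wXY0 : 0 <= wXY by apply: le_trans hd.
set r := p ^+ 2 + q ^+ 2.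
have r0 : 0 <= r by rewrite addr_ge0 // sqr_ge0.
have E1 : p * q * d <= u * v * wXY.
  apply: (le_trans (ler_norm _)); rewrite !normrM -/u -/v.
  by rewrite ler_wpM2l // mulr_ge0.
have E2 : p ^+ 2 * a + q ^+ 2 * b + p * q * d <= u ^+ 2 * wX + v ^+ 2 * wY + u * v * wXY.
  rewrite u2 v2; have := sqr_ge0 p; have := sqr_ge0 q; nra.
set L := (u ^+ 2 - v ^+ 2) * (wX - wY) + 2 * u * v * wXY.
have L2 : L ^+ 2 <= (r * S) ^+ 2.
  have -> : (r * S) ^+ 2 = L ^+ 2 + ((u ^+ 2 - v ^+ 2) * wXY - 2 * u * v * (wX - wY)) ^+ 2.
    rewrite exprMn S2 /r -u2 -v2 /L; ring.
  by rewrite lerDl sqr_ge0.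
have LS : L <= r * S by apply: sq_le => //; rewrite mulr_ge0.
have E3 : 2 * (u ^+ 2 * wX + v ^+ 2 * wY + u * v * wXY) <= r * (wX + wY + S).
  have -> : 2 * (u ^+ 2 * wX + v ^+ 2 * wY + u * v * wXY) = r * (wX + wY) + L.
    by rewrite /L /r -u2 -v2; ring.
  lra.
set F := wX + wY + S.
have F0 : 0 <= F by rewrite /F; lra.
have E4 : p ^+ 2 * a + q ^+ 2 * b + p * q * d <= r * F / 2 by rewrite /F; lra.
have h2 : r ^+ 2 <= r * F / 2 * G.
  by apply: (le_trans h); apply: ler_wpM2r.
have h3 : r <= F / 2 * G.
  have [->|rp] := eqVneq r 0; first by rewrite mulr_ge0 // divr_ge0.
  have rp' : 0 < r by rewrite lt_def rp r0.
  rewrite -(ler_pM2l rp') !mulrA -expr2; exact: h2.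
have : F * G <= F * O ^+ 2 by rewrite ler_wpM2l.
rewrite -/F; lra.
Qed.

End Num2.

Section Hilb.
Variable R : realType.
Variable V : lmodType R[i].
Variable ip : V -> V -> R[i].
Hypothesis hH : is_hilbert ip.

Local Notation vn := (vnorm ip).
Definition gg (u v : V) : R := Rc (ip u v).

Lemma ipDZl a x y z : ip (a *: x + y) z = a * ip x z + ip y z.
Proof. exact: (ip_linl hH). Qed.
Lemma ipC x y : ip y x = (ip x y)^*.
Proof. exact: (ip_conj hH). Qed.

Lemma ip0l z : ip 0 z = 0.
Proof.
have := ipDZl (-1) 0 0 z; rewrite scaler0 addr0 mulN1r addNr; done.
Qed.
Lemma ip0r z : ip z 0 = 0.
Proof. by rewrite ipC ip0l conjc0. Qed.
Lemma ipZl a x z : ip (a *: x) z = a * ip x z.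
Proof. by rewrite -[a *: x]addr0 ipDZl ip0l addr0. Qed.
Lemma ipDl x y z : ip (x + y) z = ip x z + ip y z.
Proof. by rewrite -[x]scale1r ipDZl mul1r scale1r. Qed.
Lemma ipNl x z : ip (- x) z = - ip x z.
Proof. by rewrite -scaleN1r ipZl mulN1r. Qed.
Lemma ipBl x y z : ip (x - y) z = ip x z - ip y z.
Proof. by rewrite ipDl ipNl. Qed.
Lemma ipZr a x z : ip z (a *: x) = a^* * ip z x.
Proof. by rewrite ipC ipZl rmorphM /= -ipC. Qed.
Lemma ipDr x y z : ip z (x + y) = ip z x + ip z y.
Proof. by rewrite ipC ipDl rmorphD /= -!ipC. Qed.
Lemma ipBr x y z : ip z (x - y) = ip z x - ip z y.
Proof. by rewrite ipC ipBl rmorphB /= -!ipC. Qed.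

Lemma gg_sym u v : gg u v = gg v u.
Proof. by rewrite /gg ipC Rc_conj. Qed.
Lemma ggDl u v w : gg (u + v) w = gg u w + gg v w.
Proof. by rewrite /gg ipDl RcD. Qed.
Lemma ggZl (s : R) u w : gg (s%:C *: u) w = s * gg u w.
Proof. by rewrite /gg ipZl RcM_real. Qed.
Lemma ggDr u v w : gg w (u + v) = gg w u + gg w v.
Proof. by rewrite gg_sym ggDl !(gg_sym w). Qed.
Lemma ggZr (s : R) u w : gg w (s%:C *: u) = s * gg w u.
Proof. by rewrite gg_sym ggZl gg_sym. Qed.

Lemma gg_ge0 u : 0 <= gg u u.
Proof.
have [->|nz] := eqVneq u 0; first by rewrite /gg ip0l.
have := ip_pos hH nz; rewrite ltcE => /andP[_ h]; exact: ltW.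
Qed.

Lemma gg_eq0 u : gg u u = 0 -> u = 0.
Proof.
move=> h; apply/eqP; apply/negPn/negP => nz.
by have := ip_pos hH nz; rewrite ltcE /= -/(gg u u) h ltxx andbF.
Qed.

Lemma vn_ge0 u : 0 <= vn u.
Proof. exact: sqrtr_ge0. Qed.
Lemma vn_sq u : vn u ^+ 2 = gg u u.
Proof. by rewrite /vnorm sqr_sqrtr // gg_ge0. Qed.

Lemma gg_quad u v (s t : R) :
  gg (s%:C *: u + t%:C *: v) (s%:C *: u + t%:C *: v) =
  s ^+ 2 * gg u u + 2 * s * t * gg u v + t ^+ 2 * gg v v.
Proof.
rewrite !ggDl !ggDr !ggZl !ggZr (gg_sym v u); ring.
Qed.

Lemma gg_cs u v : gg u v <= vn u * vn v.
Proof.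
apply: real_cs; last by apply: gg_ge0. 2: by apply: gg_ge0.
by move=> s t; rewrite -gg_quad gg_ge0.
Qed.

Lemma ip_uu u : ip u u = (gg u u)%:C.
Proof.
have h := ipC u u. move: h; rewrite /gg; case: (ip u u) => a b /= [] h.
by apply/eqP; rewrite eq_complex /= eqxx /=; apply/eqP; lra.
Qed.

Lemma vnZ (c : R[i]) u : vn (c *: u) = normc c * vn u.
Proof.
have h : gg (c *: u) (c *: u) = normc c ^+ 2 * gg u u.
  rewrite /gg ipZl ipZr ip_uu normc_sq; move: (gg u u) => k.
  by case: c => a b /=; ring.
rewrite /vnorm -/(gg (c *: u) (c *: u)) h sqrtrM ?sqr_ge0 // sqrtr_sqr.
by rewrite ger0_norm ?normc_ge0.
Qed.


Lemma ip_cs u v : normc (ip u v) <= vn u * vn v.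
Proof.
have h := gg_cs ((ip u v)^* *: u) v.
rewrite /gg ipZl Rc_conjM vnZ normc_conj in h.
have h1 := normc_ge0 (ip u v); have h2 := vn_ge0 u; have h3 := vn_ge0 v.
have h4 : 0 <= vn u * vn v by apply: mulr_ge0.
nra.
Qed.

Lemma gg_le u v : gg u v <= vn u * vn v.
Proof. exact: gg_cs. Qed.

Lemma vnD u v : vn (u + v) <= vn u + vn v.
Proof.
apply: sq_le; last by rewrite addr_ge0 ?vn_ge0.
rewrite vn_sq ggDl !ggDr (gg_sym v u).
have := gg_cs u v; have := vn_sq u; have := vn_sq v. nra.
Qed.

Lemma vnN u : vn (- u) = vn u.
Proof.
rewrite -scaleN1r vnZ.
have -> : normc (-1 : R[i]) = 1 by rewrite -(rmorphN1 (real_complex R)) normc_real normrN1.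
by rewrite mul1r.
Qed.

Lemma vn_eq0 u : vn u = 0 -> u = 0.
Proof. by move=> h; apply: gg_eq0; rewrite -vn_sq h expr0n. Qed.

Lemma lin0 {T : V -> V} : (forall (a : R[i]) x y, T (a *: x + y) = a *: T x + T y) -> T 0 = 0.
Proof.
move=> hT; have := hT (-1) 0 0; rewrite scaler0 addr0 scaleN1r addNr; done.
Qed.
Lemma linZ {T : V -> V} : (forall (a : R[i]) x y, T (a *: x + y) = a *: T x + T y) ->
  forall a x, T (a *: x) = a *: T x.
Proof. by move=> hT a x; rewrite -[a *: x]addr0 hT (lin0 hT) addr0. Qed.
Lemma linD {T : V -> V} : (forall (a : R[i]) x y, T (a *: x + y) = a *: T x + T y) ->
  forall x y, T (x + y) = T x + T y.
Proof. by move=> hT x y; have := hT 1 x y; rewrite !scale1r. Qed.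

Lemma sup_ge0 (E : set R) : (forall e, E e -> 0 <= e) -> 0 <= sup E.
Proof.
move=> h; case: (pselect (has_sup E)) => hs; last by rewrite sup_out.
case: (hs) => [[e Ee] _]; apply: (le_trans (h e Ee)).
exact: sup_upper_bound.
Qed.

Lemma opnorm_ge0 T : 0 <= opnorm ip T.
Proof. apply: sup_ge0 => e [x _ <-]; exact: vn_ge0. Qed.
Lemma numrad_ge0 T : 0 <= numrad ip T.
Proof. apply: sup_ge0 => e [x _ <-]; exact: normc_ge0. Qed.

Lemma op_bound T : bounded_op ip T -> forall u, vn (T u) <= opnorm ip T * vn u.
Proof.
move=> [hl [M hM]] u.
have ub : has_ubound [set vn (T x) | x in [set x : V | vn x <= 1]].
  exists `|M| => e [x /= hx <-]; apply: (le_trans (hM x)).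
  have := vn_ge0 x; have := normr_ge0 M; have := ler_norm M; nra.
have [z|nz] := eqVneq (vn u) 0.
  by rewrite z (vn_eq0 _ z) (lin0 hl) mulr0 /vnorm /gg ip0l /= sqrtr0.
have up : 0 < vn u by rewrite lt_def nz vn_ge0.
set c : R := (vn u)^-1.
have hc : vn (c%:C *: u) = 1.
  by rewrite vnZ normc_real ger0_norm ?invr_ge0 ?vn_ge0 // mulVf.
have hc' : vn (c%:C *: u) <= 1 by rewrite hc.
have := ub_le_sup ub (ex_intro2 _ _ (c%:C *: u) hc' erefl).
rewrite (linZ hl) vnZ normc_real ger0_norm ?invr_ge0 ?vn_ge0 // => h.
have e : c * vn u = 1 by rewrite mulVf.
have h2 : c * vn (T u) * vn u <= opnorm ip T * vn u by rewrite ler_wpM2r // ltW.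
have -> : vn (T u) = c * vn (T u) * vn u by rewrite mulrAC e mul1r.
exact: h2.
Qed.


Lemma adj_bound T Ts : bounded_op ip T -> is_adjoint ip T Ts ->
  forall x, vn (Ts x) <= opnorm ip T * vn x.
Proof.
move=> hT hTs x.
have e : gg (Ts x) (Ts x) = Rc (ip (T (Ts x)) x) by rewrite /gg hTs.
have h1 : Rc (ip (T (Ts x)) x) <= opnorm ip T * vn (Ts x) * vn x.
  apply: (le_trans (ler_norm _)); apply: (le_trans (Rc_le _)).
  apply: (le_trans (ip_cs _ _)); rewrite ler_wpM2r ?vn_ge0 //.
  exact: op_bound.
rewrite -e -vn_sq in h1.
have h2 := vn_ge0 (Ts x); have h3 := vn_ge0 x; have h4 := opnorm_ge0 T.
have [v0|vp] := eqVneq (vn (Ts x)) 0.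
  by rewrite v0 mulr_ge0.
have vp' : 0 < vn (Ts x) by rewrite lt_def vp h2.
rewrite -(ler_pM2l vp'); rewrite expr2 in h1; nra.
Qed.

Lemma conj_inv2 : Num.conj ((2%:R)^-1 : R[i]) = (2%:R)^-1.
Proof. rewrite inv2; apply/eqP; rewrite eq_complex /=; apply/andP; split; apply/eqP; ring. Qed.
Lemma conj_inv2i : Num.conj ((2%:R * 'i)^-1 : R[i]) = - (2%:R * 'i)^-1.
Proof. rewrite inv2i; apply/eqP; rewrite eq_complex /=; apply/andP; split; apply/eqP; ring. Qed.
Lemma i_inv2i : ('i * (2%:R * 'i)^-1 : R[i]) = (2%:R)^-1.
Proof. rewrite inv2i inv2; simpc; rewrite /=. by apply/eqP; rewrite eq_complex /=; apply/andP; split; apply/eqP; ring. Qed.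
Lemma normc_inv2 : normc ((2%:R)^-1 : R[i]) = 2^-1.
Proof. by rewrite inv2 /= expr0n /= addr0 sqrtr_sqr ger0_norm // invr_ge0. Qed.
Lemma normc_inv2i : normc ((2%:R * 'i)^-1 : R[i]) = 2^-1.
Proof. by rewrite inv2i /= expr0n /= add0r sqrrN sqrtr_sqr ger0_norm // invr_ge0. Qed.

Variables B Bs : V -> V.
Hypothesis hBs : is_adjoint ip B Bs.
Hypothesis hB : bounded_op ip B.
Local Notation X := (re_part B Bs).
Local Notation Y := (im_part B Bs).

Lemma Bs_ip u v : ip (Bs u) v = ip u (B v).
Proof. by rewrite (ipC v (Bs u)) -hBs -ipC. Qed.

Lemma X_sa u v : ip (X u) v = ip u (X v).
Proof.
rewrite /re_part /opscale /opadd ipZl ipZr ipDl ipDr hBs Bs_ip.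
by rewrite conj_inv2 addrC.
Qed.

Lemma Y_sa u v : ip (Y u) v = ip u (Y v).
Proof.
rewrite /im_part /opscale /opsub ipZl ipZr ipBl ipBr hBs Bs_ip.
by rewrite conj_inv2i mulNr -mulrN opprB.
Qed.

Lemma BXY x : B x = X x + 'i *: Y x.
Proof.
rewrite /re_part /im_part /opscale /opadd /opsub /= scalerA i_inv2i -scalerDr.
have -> : B x + Bs x + (B x - Bs x) = B x *+ 2 by by rewrite mulr2n addrA addrAC addrK.
rewrite -(scaler_nat 2 (B x)) scalerA mulVf ?scale1r //.
by rewrite pnatr_eq0.
Qed.

Lemma X_bound x : vn (X x) <= opnorm ip B * vn x.
Proof.
rewrite /re_part /opscale /opadd vnZ normc_inv2.
have h := vnD (B x) (Bs x).
have h1 := @op_bound B hB x. have h2 := @adj_bound B Bs hB hBs x.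
lra.
Qed.

Lemma Y_bound x : vn (Y x) <= opnorm ip B * vn x.
Proof.
rewrite /im_part /opscale /opsub vnZ normc_inv2i.
have h := vnD (B x) (- Bs x). rewrite vnN in h.
have h1 := @op_bound B hB x. have h2 := @adj_bound B Bs hB hBs x.
lra.
Qed.


Lemma sq_mono (a b : R) : 0 <= a -> a <= b -> a ^+ 2 <= b ^+ 2.
Proof. move=> h1 h2; nra. Qed.

Lemma Rc_sq (w : R[i]) : Rc w ^+ 2 <= normc w ^+ 2.
Proof. rewrite normc_sq; have := sqr_ge0 (Ic w); lra. Qed.
Lemma Ic_sq (w : R[i]) : Ic w ^+ 2 <= normc w ^+ 2.
Proof. rewrite normc_sq; have := sqr_ge0 (Rc w); lra. Qed.

Lemma core x y (p q : R) :
  (p * Rc (ip (X x) y) + q * Rc (ip (Y x) y)) ^+ 2 <=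
    (p ^+ 2 * gg (X x) (X x) + q ^+ 2 * gg (Y x) (Y x) + p * q * (2 * gg (X x) (Y x))) * gg y y
  /\
  (p * Ic (ip (X x) y) + q * Ic (ip (Y x) y)) ^+ 2 <=
    (p ^+ 2 * gg (X x) (X x) + q ^+ 2 * gg (Y x) (Y x) + p * q * (2 * gg (X x) (Y x))) * gg y y.
Proof.
set Z := p%:C *: X x + q%:C *: Y x.
have eZ : ip Z y = p%:C * ip (X x) y + q%:C * ip (Y x) y by rewrite ipDl !ipZl.
have hZ : normc (ip Z y) ^+ 2 <= gg Z Z * gg y y.
  rewrite -!vn_sq -exprMn; apply: sq_mono; first exact: normc_ge0.
  exact: ip_cs.
have eq : gg Z Z = p ^+ 2 * gg (X x) (X x) + q ^+ 2 * gg (Y x) (Y x) + p * q * (2 * gg (X x) (Y x)).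
  rewrite /Z gg_quad; ring.
rewrite -eq; split; apply: le_trans hZ.
  by rewrite -(RcM_real p) -(RcM_real q) -RcD -eZ Rc_sq.
by rewrite -(IcM_real p) -(IcM_real q) -IcD -eZ Ic_sq.
Qed.

Lemma z_plus A As (hAs : is_adjoint ip A As) x :
  let P := ip (X x) (As x) in let Q := ip (Y x) (As x) in
  ip (opadd (opmul A B) (opmul B As) x) x = P + 'i * Q + (P^* + 'i * Q^*).
Proof.
rewrite /= /opadd /opmul ipDl hAs (BXY x) (BXY (As x)).
rewrite (ipDl (X x)) (ipDl (X (As x))) (ipZl 'i (Y x)) (ipZl 'i (Y (As x))).
by rewrite (X_sa (As x)) (Y_sa (As x)) (ipC (X x) (As x)) (ipC (Y x) (As x)).
Qed.

Lemma z_minus A As (hAs : is_adjoint ip A As) x :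
  let P := ip (X x) (As x) in let Q := ip (Y x) (As x) in
  ip (opsub (opmul A B) (opmul B As) x) x = P + 'i * Q - (P^* + 'i * Q^*).
Proof.
rewrite /= /opsub /opmul ipBl hAs (BXY x) (BXY (As x)).
rewrite (ipDl (X x)) (ipDl (X (As x))) (ipZl 'i (Y x)) (ipZl 'i (Y (As x))).
by rewrite (X_sa (As x)) (Y_sa (As x)) (ipC (X x) (As x)) (ipC (Y x) (As x)).
Qed.


Lemma numrad_ub T K : (forall x, vn x = 1 -> normc (ip (T x) x) <= K) ->
  forall x, vn x = 1 -> normc (ip (T x) x) <= numrad ip T.
Proof.
move=> hK x hx; apply: ub_le_sup; last by exists x.
by exists K => e [z hz <-]; apply: hK.
Qed.

Lemma numrad_le T K : 0 <= K -> (forall x, vn x = 1 -> normc (ip (T x) x) <= K) ->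
  numrad ip T <= K.
Proof.
move=> K0 hK; rewrite /numrad.
case: (pselect (has_sup [set normc (ip (T x) x) | x in [set x | vn x = 1]])) => hs.
  apply: ge_sup; first by case: hs.
  by move=> e [x hx <-]; apply: hK.
by rewrite sup_out.
Qed.

Lemma X2_bound x : vn x = 1 -> normc (ip (X (X x)) x) <= opnorm ip B ^+ 2.
Proof.
move=> hx; apply: (le_trans (ip_cs _ _)); rewrite hx mulr1.
apply: (le_trans (X_bound _)); rewrite expr2 ler_wpM2l ?opnorm_ge0 //.
by apply: (le_trans (X_bound _)); rewrite hx mulr1.
Qed.
Lemma Y2_bound x : vn x = 1 -> normc (ip (Y (Y x)) x) <= opnorm ip B ^+ 2.
Proof.
move=> hx; apply: (le_trans (ip_cs _ _)); rewrite hx mulr1.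
apply: (le_trans (Y_bound _)); rewrite expr2 ler_wpM2l ?opnorm_ge0 //.
by apply: (le_trans (Y_bound _)); rewrite hx mulr1.
Qed.
Lemma XY_bound x : vn x = 1 -> normc (ip (X (Y x) + Y (X x)) x) <= 2 * opnorm ip B ^+ 2.
Proof.
move=> hx; apply: (le_trans (ip_cs _ _)); rewrite hx mulr1.
apply: (le_trans (vnD _ _)).
have h1 : vn (X (Y x)) <= opnorm ip B ^+ 2.
  apply: (le_trans (X_bound _)); rewrite expr2 ler_wpM2l ?opnorm_ge0 //.
  by apply: (le_trans (Y_bound _)); rewrite hx mulr1.
have h2 : vn (Y (X x)) <= opnorm ip B ^+ 2.
  apply: (le_trans (Y_bound _)); rewrite expr2 ler_wpM2l ?opnorm_ge0 //.
  by apply: (le_trans (X_bound _)); rewrite hx mulr1.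
lra.
Qed.

Lemma main_pw A As (hA : bounded_op ip A) (hAs : is_adjoint ip A As) x (hx : vn x = 1) :
  let rhs := 2 * opnorm ip A ^+ 2 *
     (numrad ip (opmul X X) + numrad ip (opmul Y Y) +
      Num.sqrt ((numrad ip (opmul X X) - numrad ip (opmul Y Y)) ^+ 2 +
                numrad ip (opadd (opmul X Y) (opmul Y X)) ^+ 2)) in
  normc (ip (opadd (opmul A B) (opmul B As) x) x) ^+ 2 <= rhs /\
  normc (ip (opsub (opmul A B) (opmul B As) x) x) ^+ 2 <= rhs.
Proof.
move=> rhs; rewrite /rhs.
have ha := gg_ge0 (X x).
have haX : gg (X x) (X x) <= numrad ip (opmul X X).
  have h := @numrad_ub (opmul X X) _ X2_bound x hx.
  apply: le_trans h; rewrite /opmul (X_sa (X x) x).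
  by apply: (le_trans (ler_norm _)); apply: Rc_le.
have hb := gg_ge0 (Y x).
have hbY : gg (Y x) (Y x) <= numrad ip (opmul Y Y).
  have h := @numrad_ub (opmul Y Y) _ Y2_bound x hx.
  apply: le_trans h; rewrite /opmul (Y_sa (Y x) x).
  by apply: (le_trans (ler_norm _)); apply: Rc_le.
have hd : `|2 * gg (X x) (Y x)| <= numrad ip (opadd (opmul X Y) (opmul Y X)).
  have h := @numrad_ub (opadd (opmul X Y) (opmul Y X)) _ XY_bound x hx.
  apply: le_trans h; rewrite /opadd /opmul ipDl (X_sa (Y x) x) (Y_sa (X x) x).
  apply: le_trans (Rc_le _); rewrite RcD -/(gg (Y x) (X x)) -/(gg (X x) (Y x)) gg_sym.
  by rewrite mulr2n mulrDl !mul1r.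
have hG := gg_ge0 (As x).
have hGO : gg (As x) (As x) <= opnorm ip A ^+ 2.
  rewrite -vn_sq; apply: sq_mono; first exact: vn_ge0.
  by have := @adj_bound A As hA hAs x; rewrite hx mulr1.
split.
  rewrite (@z_plus A As hAs) /= zp_norm.
  apply: (final_real _ _ _ _ _ _ _ _ _ _ ha haX hb hbY hd hG hGO).
  have [h _] := core x (As x) (Rc (ip (X x) (As x))) (Rc (ip (Y x) (As x))).
  by rewrite -!expr2 in h.
rewrite (@z_minus A As hAs) /= zm_norm.
apply: (final_real _ _ _ _ _ _ _ _ _ _ ha haX hb hbY hd hG hGO).
have [_ h] := core x (As x) (Ic (ip (X x) (As x))) (Ic (ip (Y x) (As x))).
by rewrite -!expr2 in h.
Qed.

End Hilb.

Local Close Scope complex_scope.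

Theorem theorem2p13 (R : realType) (V : lmodType R[i]) (ip : V -> V -> R[i])
  (hH : is_hilbert ip) (A As B Bs : V -> V)
  (hA : bounded_op ip A) (hB : bounded_op ip B)
  (hAs : is_adjoint ip A As) (hBs : is_adjoint ip B Bs) :
  let X := re_part B Bs in
  let Y := im_part B Bs in
  let rhs := 2 * opnorm ip A ^+ 2 *
     (numrad ip (opmul X X) + numrad ip (opmul Y Y) +
      Num.sqrt ((numrad ip (opmul X X) - numrad ip (opmul Y Y)) ^+ 2 +
                numrad ip (opadd (opmul X Y) (opmul Y X)) ^+ 2)) in
  numrad ip (opadd (opmul A B) (opmul B As)) ^+ 2 <= rhs /\
  numrad ip (opsub (opmul A B) (opmul B As)) ^+ 2 <= rhs.
Proof.
move=> X Y rhs.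
have nn := @numrad_ge0 R V ip.
have rhs0 : 0 <= rhs.
  rewrite /rhs; apply: mulr_ge0; first by rewrite mulr_ge0 // sqr_ge0.
  by rewrite !addr_ge0 ?nn ?sqrtr_ge0.
have key : forall T, (forall x, vnorm ip x = 1 -> normc (ip (T x) x) ^+ 2 <= rhs) ->
    numrad ip T ^+ 2 <= rhs.
  move=> T hT; rewrite -(sqr_sqrtr rhs0); apply: sq_mono; first exact: nn.
  apply: numrad_le; first exact: sqrtr_ge0.
  move=> x hx; apply: sq_le; last exact: sqrtr_ge0.
  by rewrite sqr_sqrtr // hT.
have M := @main_pw R V ip hH B Bs hBs hB A As hA hAs.
split; apply: key => x hx; case: (M x hx) => h1 h2; [exact: h1 | exact: h2].
Qed.
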